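(* Let $l,n$ be positive integers, $\mathbf{x}_1,\dots,\mathbf{x}_l\in\mathbb{R}^n$, $y_1,\dots,y_l\in\mathbb{R}$, $a_1,\dots,a_l,b_1,\dots,b_l\in\mathbb{R}$. Let $\varphi:\mathbb{R}\to[0,\infty)$ be nonconstant, continuous and sublinear, with $\varphi^*=\iota_{[\alpha,\beta]}$, $\alpha<\beta$. Let $\mathbf Z\in\mathbb{R}^{l\times n}$ have $i$-th row $a_i\mathbf x_i^T$, $\bar{\mathbf y}=(b_1y_1,\dots,b_ly_l)^T$, and for $C>0$ let $\theta^*(C)$ denote an optimal solution of the dual problem $$\min_{\theta\in[\alpha,\beta]^l}\ \tfrac{C}{2}\|\mathbf Z^T\theta\|^2-\langle\bar{\mathbf y},\theta\rangle.$$ Suppose $\theta^*(C_0)$ is given for some $C_0>0$, and let $C>C_0$. If for some index $i$ $$\tfrac{C+C_0}{2}\langle\mathbf Z^T\theta^*(C_0),a_i\mathbf x_i\rangle-\tfrac{C-C_0}{2}\|\mathbf Z^T\theta^*(C_0)\|\,\|a_i\mathbf x_i\|>b_iy_i,$$ then $[\theta^*(C)]_i=\alpha$, i.e., $i\in\mathcal R$. Similarly, if $$\tfrac{C+C_0}{2}\langle\mathbf Z^T\theta^*(C_0),a_i\mathbf x_i\rangle+\tfrac{C-C_0}{2}\|\mathbf Z^T\theta^*(C_0)\|\,\|a_i\mathbf x_i\|<b_iy_i,$$ then $[\theta^*(C)]_i=\beta$, i.e., $i\in\mathcal L$.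
   Context: This dual corresponds to the primal problem $\min_{\mathbf w\in\mathbb{R}^n}\frac12\|\mathbf w\|^2+C\sum_{i=1}^l\varphi(\mathbf w^T(a_i\mathbf x_i)+b_iy_i)$, whose unique optimal solution $\mathbf w^*(C)$ satisfies $\mathbf w^*(C)=-C\mathbf Z^T\theta^*(C)$. Sublinear means convex and $\varphi(tx)=t\varphi(x)$ for $t>0$; $\varphi^*(s)=\sup_t(st-\varphi(t))$ and $\iota_{[\alpha,\beta]}$ is $0$ on $[\alpha,\beta]$ and $+\infty$ elsewhere. The index sets are $\mathcal R=\{i:-\langle\mathbf w^*(C),a_i\mathbf x_i\rangle>b_iy_i\}$ and $\mathcal L=\{i:-\langle\mathbf w^*(C),a_i\mathbf x_i\rangle<b_iy_i\}$. *)

(* Defs.v *)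
From HB Require Import structures.
From mathcomp Require Import all_boot all_order all_algebra.
From mathcomp Require Import all_classical all_reals all_analysis.
Set Implicit Arguments. Unset Strict Implicit. Unset Printing Implicit Defensive.
Import Order.TTheory GRing.Theory Num.Theory.
Import numFieldNormedType.Exports.
Local Open Scope ring_scope.

Section Defs.
Variable R : realType.

Definition dotv (n : nat) (u v : 'cV[R]_n) : R := \sum_(j < n) u j 0 * v j 0.
Definition normv (n : nat) (u : 'cV[R]_n) : R := Num.sqrt (dotv u u).

Definition convex_fun (phi : R -> R) : Prop :=
  forall x y (t : R), 0 <= t -> t <= 1 ->
    phi (t * x + (1 - t) * y) <= t * phi x + (1 - t) * phi y.
Definition sublinear (phi : R -> R) : Prop :=
  convex_fun phi /\ forall (t x : R), 0 < t -> phi (t * x) = t * phi x.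

(* phi^*(s) = sup_t (s t - phi t) equals iota_[alpha,beta](s):
   the supremum is 0 on [alpha,beta] and +oo outside. *)
Definition conj_is_indicator (phi : R -> R) (alpha beta : R) : Prop :=
  forall s : R,
    ((alpha <= s <= beta) ->
       (forall t, s * t - phi t <= 0) /\
       (forall e : R, 0 < e -> exists t, - e < s * t - phi t)) /\
    (~ (alpha <= s <= beta) -> forall M : R, exists t, M < s * t - phi t).

Definition Zmat (l n : nat) (a : 'I_l -> R) (x : 'I_l -> 'cV[R]_n) : 'M[R]_(l, n) :=
  \matrix_(i < l, j < n) (a i * x i j 0).

Definition ybar (l : nat) (b y : 'I_l -> R) : 'cV[R]_l := \col_(i < l) (b i * y i).

Definition dual_feasible (l : nat) (alpha beta : R) (theta : 'cV[R]_l) : Prop :=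
  forall i : 'I_l, alpha <= theta i 0 <= beta.

Definition dual_obj (l n : nat) (Z : 'M[R]_(l, n)) (yb : 'cV[R]_l) (C : R)
    (theta : 'cV[R]_l) : R :=
  C / 2 * (normv (Z^T *m theta)) ^+ 2 - dotv yb theta.

Definition dual_optimal (l n : nat) (Z : 'M[R]_(l, n)) (yb : 'cV[R]_l)
    (alpha beta C : R) (theta : 'cV[R]_l) : Prop :=
  dual_feasible alpha beta theta /\
  forall theta' : 'cV[R]_l, dual_feasible alpha beta theta' ->
    dual_obj Z yb C theta <= dual_obj Z yb C theta'.

End Defs.

(* Main.v *)
Require Import Defs.
From HB Require Import structures.
From mathcomp Require Import all_boot all_order all_algebra.
From mathcomp Require Import all_classical all_reals all_analysis.
Import Order.TTheory GRing.Theory Num.Theory.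
Import numFieldNormedType.Exports.
From mathcomp Require Import ring lra.
Local Open Scope ring_scope.


Section Aux.
Set Implicit Arguments. Unset Strict Implicit.
Variable R : realType.

Lemma dotvC m (u v : 'cV[R]_m) : dotv u v = dotv v u.
Proof. by apply: eq_bigr => j _; rewrite mulrC. Qed.

Lemma dotvDl m (u v w : 'cV[R]_m) : dotv (u + v) w = dotv u w + dotv v w.
Proof. rewrite /dotv -big_split /=; apply: eq_bigr => j _; by rewrite mxE mulrDl. Qed.

Lemma dotvZl m k (u w : 'cV[R]_m) : dotv (k *: u) w = k * dotv u w.
Proof. rewrite /dotv mulr_sumr; apply: eq_bigr => j _; by rewrite mxE mulrA. Qed.

Lemma dotvNl m (u w : 'cV[R]_m) : dotv (- u) w = - dotv u w.
Proof. by rewrite -scaleN1r dotvZl mulN1r. Qed.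

Lemma dotvBl m (u v w : 'cV[R]_m) : dotv (u - v) w = dotv u w - dotv v w.
Proof. by rewrite dotvDl dotvNl. Qed.

Lemma dotvDr m (u v w : 'cV[R]_m) : dotv w (u + v) = dotv w u + dotv w v.
Proof. by rewrite dotvC dotvDl !(dotvC w). Qed.

Lemma dotvZr m k (u w : 'cV[R]_m) : dotv w (k *: u) = k * dotv w u.
Proof. by rewrite dotvC dotvZl dotvC. Qed.

Lemma dotvBr m (u v w : 'cV[R]_m) : dotv w (u - v) = dotv w u - dotv w v.
Proof. by rewrite dotvC dotvBl !(dotvC w). Qed.

Lemma dotvNr m (u w : 'cV[R]_m) : dotv w (- u) = - dotv w u.
Proof. by rewrite dotvC dotvNl dotvC. Qed.

Lemma dotv_ge0 m (u : 'cV[R]_m) : 0 <= dotv u u.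
Proof. by apply: sumr_ge0 => j _; rewrite -expr2 sqr_ge0. Qed.

Lemma normv_sq m (u : 'cV[R]_m) : normv u ^+ 2 = dotv u u.
Proof. by rewrite sqr_sqrtr // dotv_ge0. Qed.

Lemma quad_cs (A B Cc : R) : 0 <= A -> 0 <= Cc ->
  (forall t, 0 <= A * t ^+ 2 + 2 * B * t + Cc) ->
  (forall t, 0 <= Cc * t ^+ 2 + 2 * B * t + A) -> B ^+ 2 <= A * Cc.
Proof.
move=> hA hC h1 h2.
have [Ap|A0] := ltrP 0 A.
  have := h1 (- B / A).
  have e : A * (- B / A) ^+ 2 + 2 * B * (- B / A) + Cc = Cc - B ^+ 2 / A.
    by field; rewrite gt_eqF.
  rewrite e subr_ge0 ler_pdivrMr // => H; lra.
have [Cp|C0] := ltrP 0 Cc.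
  have := h2 (- B / Cc).
  have e : Cc * (- B / Cc) ^+ 2 + 2 * B * (- B / Cc) + A = A - B ^+ 2 / Cc.
    by field; rewrite gt_eqF.
  rewrite e subr_ge0 ler_pdivrMr // => H; nra.
have := h1 (- B). have -> : A = 0 by lra. have -> : Cc = 0 by lra.
move=> H; nra.
Qed.

Lemma CS m (u w : 'cV[R]_m) : - (normv u * normv w) <= dotv u w.
Proof.
have key : dotv u w ^+ 2 <= dotv u u * dotv w w.
  apply: quad_cs; rewrite ?dotv_ge0 // => t.
    have := dotv_ge0 (t *: u + w).
    rewrite !(dotvDl, dotvDr, dotvZl, dotvZr) (dotvC w u); nra.
  have := dotv_ge0 (t *: w + u).
  rewrite !(dotvDl, dotvDr, dotvZl, dotvZr) (dotvC w u); nra.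
rewrite /normv -sqrtrM ?dotv_ge0 //.
have h : Num.sqrt (dotv u w ^+ 2) <= Num.sqrt (dotv u u * dotv w w).
  by rewrite ler_sqrt // mulr_ge0 ?dotv_ge0.
rewrite sqrtr_sqr in h.
have := ler_norm (- dotv u w); rewrite normrN; lra.
Qed.

Lemma lim0 (g K : R) : 0 <= K -> (forall t, 0 < t -> t <= 1 -> 0 <= t * g + t ^+ 2 * K) -> 0 <= g.
Proof.
move=> hK H; rewrite leNgt; apply/negP => gneg.
have hKg : 0 < K - g by lra.
set t := - g / (2 * (K - g)).
have tpos : 0 < t by rewrite divr_gt0 //; lra.
have e : t * (2 * (K - g)) = - g by rewrite /t mulfVK // gt_eqF //; lra.
have t1 : t <= 1.
  have : t * (2 * (K - g)) <= 1 * (2 * (K - g)) by rewrite e; lra.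
  by rewrite ler_pM2r //; lra.
have := H t tpos t1 => h.
have h2 : 0 <= g + t * K.
  have : 0 <= t * (g + t * K) by rewrite mulrDr mulrA -expr2.
  by rewrite pmulr_rge0.
have h3 : 0 <= (2 * (K - g)) * (g + t * K) by apply: mulr_ge0 => //; lra.
have : (2 * (K - g)) * (g + t * K) = g * (K - 2 * g).
  have -> : (2 * (K - g)) * (g + t * K) = 2 * (K - g) * g + (t * (2 * (K - g))) * K by ring.
  rewrite e; ring.
move=> e2; rewrite e2 in h3; nra.
Qed.

Lemma VI l n (Z : 'M[R]_(l, n)) yb al be (C : R) th th' : 0 < C ->
  dual_optimal Z yb al be C th -> dual_feasible al be th' ->
  0 <= C * (dotv (Z^T *m th) (Z^T *m th') - dotv (Z^T *m th) (Z^T *m th))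
       - (dotv yb th' - dotv yb th).
Proof.
move=> hC [fe opt] fe'.
set v := Z^T *m th; set p := Z^T *m th'.
apply: (@lim0 _ (C / 2 * dotv (p - v) (p - v))).
  by rewrite mulr_ge0 ?dotv_ge0 // divr_ge0 //; lra.
move=> t t0 t1.
have fet : dual_feasible al be (th + t *: (th' - th)).
  move=> j; rewrite !mxE; have := fe j; have := fe' j.
  move=> /andP[a1 a2] /andP[b1 b2]; apply/andP; split; nra.
have := opt _ fet; rewrite /dual_obj !normv_sq.
rewrite mulmxDr -scalemxAr mulmxBr -/v -/p.
rewrite !(dotvDl, dotvDr, dotvZl, dotvZr, dotvBl, dotvBr, dotvNl, dotvNr) !(dotvC p v).
move=> h; nra.
Qed.

Lemma dotv_delta m (u : 'cV[R]_m) i : dotv u (delta_mx i 0) = u i 0.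
Proof.
rewrite /dotv (bigD1 i) //= big1 => [|j ji]; first by rewrite !mxE !eqxx /= mulr1 addr0.
by rewrite !mxE (negbTE ji) mulr0.
Qed.

Lemma Zcol l n (a : 'I_l -> R) (x : 'I_l -> 'cV[R]_n) i :
  (Zmat a x)^T *m delta_mx i 0 = a i *: x i.
Proof. by rewrite -colE; apply/matrixP => j k; rewrite !mxE (ord1 k). Qed.

Lemma coord l n (Z : 'M[R]_(l, n)) yb al be (C : R) th i (c : R) : 0 < C ->
  dual_optimal Z yb al be C th -> al <= c <= be ->
  0 <= (c - th i 0) * (C * dotv (Z^T *m th) (Z^T *m delta_mx i 0) - yb i 0).
Proof.
move=> hC op hc.
have fe : dual_feasible al be (th + (c - th i 0) *: delta_mx i 0).
  move=> j; rewrite !mxE; case: (eqVneq j i) => [->|ji] /=.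
    by rewrite mulr1 addrC subrK.
  by rewrite mulr0 addr0; case: op => f _; apply: f.
have := VI hC op fe.
rewrite mulmxDr -scalemxAr !(dotvDr, dotvZr) dotv_delta.
move=> h; nra.
Qed.
End Aux.
Unset Implicit Arguments.

Theorem theorem3 (R : realType) (l n : nat) (hl : (0 < l)%N) (hn : (0 < n)%N)
  (x : 'I_l -> 'cV[R]_n) (y a b : 'I_l -> R)
  (phi : R -> R) (alpha beta : R)
  (phi_nonneg : forall t, 0 <= phi t)
  (phi_nonconst : exists t1 t2, phi t1 <> phi t2)
  (phi_cont : continuous phi)
  (phi_sublin : sublinear phi)
  (phi_conj : conj_is_indicator phi alpha beta)
  (hab : alpha < beta)
  (C0 C : R) (hC0 : 0 < C0) (hC : C0 < C)
  (theta0 theta : 'cV[R]_l)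
  (opt0 : dual_optimal (Zmat a x) (ybar b y) alpha beta C0 theta0)
  (opt : dual_optimal (Zmat a x) (ybar b y) alpha beta C theta)
  (i : 'I_l) :
  let u := (Zmat a x)^T *m theta0 in
  let axi := a i *: x i in
  ((C + C0) / 2 * dotv u axi - (C - C0) / 2 * normv u * normv axi > b i * y i ->
     theta i 0 = alpha) /\
  ((C + C0) / 2 * dotv u axi + (C - C0) / 2 * normv u * normv axi < b i * y i ->
     theta i 0 = beta).

Proof.
move=> u axi.
have hC' : 0 < C by lra.
set Z := Zmat a x; set v := Z^T *m theta.
have h1 := VI hC' opt (proj1 opt0).
have h2 := VI hC0 opt0 (proj1 opt).
rewrite -/v -/u in h1 h2.
have hball : 0 <= C * (dotv v u - dotv v v) + C0 * (dotv u v - dotv u u) by lra.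
set d := C *: v - ((C + C0) / 2) *: u.
have hcs := CS d axi.
have hdd : dotv d d <= ((C - C0) / 2) ^+ 2 * dotv u u.
  rewrite /d !(dotvBl, dotvBr, dotvZl, dotvZr) (dotvC u v).
  rewrite (dotvC u v) in hball.
  have hC2 : 0 < C by lra.
  nra.
have hr : 0 <= (C - C0) / 2 by apply: divr_ge0; lra.
have hnd : normv d <= (C - C0) / 2 * normv u.
  rewrite /normv -(ger0_norm hr) -sqrtr_sqr -sqrtrM ?sqr_ge0 //.
  by rewrite ler_sqrt // mulr_ge0 ?sqr_ge0 ?dotv_ge0.
have hnz : 0 <= normv axi by apply: sqrtr_ge0.
have hdz : dotv d axi = C * dotv v axi - (C + C0) / 2 * dotv u axi.
  by rewrite /d !(dotvBl, dotvZl).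
have key : (C + C0) / 2 * dotv u axi - (C - C0) / 2 * normv u * normv axi
           <= C * dotv v axi.
  have : normv d * normv axi <= (C - C0) / 2 * normv u * normv axi
    by apply: ler_wpM2r.
  lra.
have key2 : C * dotv v axi <=
   (C + C0) / 2 * dotv u axi + (C - C0) / 2 * normv u * normv axi.
  have hcs' := CS (- d) axi.
  rewrite dotvNl in hcs'.
  have : normv d * normv axi <= (C - C0) / 2 * normv u * normv axi
    by apply: ler_wpM2r.
  have en : normv (- d) = normv d by rewrite /normv dotvNl dotvNr opprK.
  rewrite en in hcs'.
  lra.
have hZ : Z^T *m delta_mx i 0 = axi by rewrite Zcol.
have hy : ybar b y i 0 = b i * y i by rewrite mxE.
have [fa fb] := andP (proj1 opt i).
split => H.
  have hc : alpha <= alpha <= beta by rewrite lexx ltW.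
  have := coord (c := alpha) i hC' opt hc; rewrite hZ hy => h.
  have g : 0 < C * dotv v axi - b i * y i by lra.
  rewrite pmulr_lge0 // in h; apply/eqP; rewrite eq_le fa /=; lra.
have hc : alpha <= beta <= beta by rewrite lexx ltW.
have := coord (c := beta) i hC' opt hc; rewrite hZ hy => h.
have g : C * dotv v axi - b i * y i < 0 by lra.
rewrite nmulr_lge0 // in h; apply/eqP; rewrite eq_le fb /=; lra.
Qed.
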